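(* Let $n\geq1$ and $m=2^{n+1}-1$. Let $e_1,e_3,\dots,e_{2^n-1}\in\mathrm K(n)^*(\mathrm{SO}_m)$ be the generators of $\mathrm K(n)^*(\mathrm{SO}_m)=\mathbb F_2[v_n^{\pm1}][e_1,e_3,\dots,e_{2^n-1}]/(e_{2i-1}^{2^{k_i}})$, $k_i=\lfloor\log_2\frac{2^{n+1}-2}{2i-1}\rfloor$, with co-multiplication as in Theorem 3.1, and let $\alpha_{2^n-1}\in\mathrm K(n)^*(\mathrm{SO}_m)^\vee$ be the element of the basis dual to the monomial basis $\{\prod_i e_{2i-1}^{t_i}:0\le t_i<2^{k_i}\}$ corresponding to $e_{2^n-1}$. Then the only idempotents of the algebra $\mathrm K(n)^*(\mathrm{SO}_m)^\vee$ other than $0$ and $1$ are $v_n^{-1}\alpha_{2^n-1}$ and $1-v_n^{-1}\alpha_{2^n-1}$.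
   Context: Base field of characteristic $0$, prime $2$. $\mathrm K(n)^*=\Omega^*\otimes_{\mathbb L}\mathbb F_2[v_n^{\pm1}]$ algebraic Morava K-theory; $\mathrm K(n)^*(\mathrm{SO}_m)$ is a Hopf algebra over $\mathbb F_2[v_n^{\pm1}]$, free of finite rank, with co-multiplication induced by the multiplication of the split group $\mathrm{SO}_m$; $\mathrm K(n)^*(\mathrm{SO}_m)^\vee=\mathrm{Hom}_{\mathbb F_2[v_n^{\pm1}]}(\mathrm K(n)^*(\mathrm{SO}_m),\mathbb F_2[v_n^{\pm1}])$ with multiplication dual to the co-multiplication. Theorem 3.1: $\widetilde\Delta(e_{2^n-1})=v_ne_{2^n-1}\otimes e_{2^n-1}$ and, with $\langle t\rangle=2^n-1-t$, $e_{2^dj}:=e_j^{2^d}$, $\widetilde\Delta(e_{\langle 2k\rangle})=\sum_{i=0}^{\nu_2(k)}v_n^{i+1}e_{\langle k/2^i\rangle}\otimes e_{\langle k/2^i\rangle}\prod_{j<i}(e_{\langle k/2^j\rangle}\otimes1+1\otimes e_{\langle k/2^j\rangle})$ for $1\le k\le2^{n-1}-1$. *)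

(* Defs.v *)
From HB Require Import structures.
From mathcomp Require Import all_boot all_order all_algebra.
From mathcomp Require Import fraction.
From mathcomp Require Import mpoly.
Set Implicit Arguments. Unset Strict Implicit. Unset Printing Implicit Defensive.
Import GRing.Theory.
Local Open Scope ring_scope.

(* Base field: the fraction field of F_2[v]; the coefficient ring
   F_2[v^{+-1}] is the subring of Laurent elements (see [laurent]). *)
Notation K := {fraction {poly 'F_2}}.
Notation tofracP := (@FracField.tofrac {poly 'F_2}).
Definition v : K := tofracP 'X.
Definition laurent (x : K) : Prop :=
  exists (k : nat) (p : {poly 'F_2}), x * v ^+ k = tofracP p.

(* Number of generators e_1, e_3, ..., e_{2^n-1} : 2^(n-1) (written so that
   the ordinal type is of the form 'I_(_.+1); equal to 2^(n-1) since it is >0).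
   Generator number i (0 <= i < Ngen n) is e_{2i+1}. *)
Definition Ngen (n : nat) : nat := ((2 ^ n.-1).-1.+1)%N.

Definition kexp (n i : nat) : nat := trunc_log 2 ((2 ^ n.+1 - 2) %/ (2 * i + 1))%N.

(* Exponent vectors t, encoding the monomial prod_i e_{2i+1}^{t_i}. *)
Definition expvec (n : nat) := {ffun 'I_(Ngen n) -> 'I_(2 ^ n)%N}.
Definition admissible (n : nat) (t : expvec n) : bool :=
  [forall i, ((t i : nat) < 2 ^ kexp n i)%N].
Definition basis (n : nat) := {t : expvec n | admissible t}.

Definition mnm_of (n : nat) (b : basis n) : 'X_{1..Ngen n} :=
  [multinom (val b i : nat) | i < Ngen n].

(* Polynomial model of A (x) A (before imposing the monomial relations):
   outer variables 'X_i = e_{2i+1} (x) 1, inner variables = 1 (x) e_{2i+1}. *)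
Definition Tens (n : nat) := {mpoly {mpoly K[Ngen n]}[Ngen n]}.

(* For s > 0 : e_s = e_{o}^{2^d} with s = 2^d o, o odd (convention
   e_{2^d j} := e_j^{2^d}); o = 2 * idx s + 1. *)
Definition idx (s : nat) : nat := ((s %/ 2 ^ logn 2 s)./2)%N.
Definition eL (n s : nat) : Tens n :=
  'X_(inord (idx s)) ^+ (2 ^ logn 2 s)%N.
Definition eR (n s : nat) : Tens n :=
  (('X_(inord (idx s)) : {mpoly K[Ngen n]}) ^+ (2 ^ logn 2 s)%N)%:MP.
Definition cst (n : nat) (c : K) : Tens n := (c%:MP)%:MP.

Definition brk (n t : nat) : nat := (2 ^ n - 1 - t)%N.

(* Reduced co-product of Theorem 3.1 on the generator e_j, j = 2i+1:
   - j = 2^n-1 : v e_j (x) e_j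
   - j = <2k>, 1 <= k <= 2^{n-1}-1 :
       sum_{l=0}^{nu_2(k)} v^{l+1} e_{<k/2^l>} (x) e_{<k/2^l>}
           prod_{l'<l} (e_{<k/2^l'>} (x) 1 + 1 (x) e_{<k/2^l'>}) *)
Definition redcoprod (n i : nat) : Tens n :=
  let j := (2 * i + 1)%N in
  if j == (2 ^ n - 1)%N then cst n v * eL n j * eR n j
  else
    let k := ((brk n j)./2)%N in
    \sum_(l < (logn 2 k).+1)
       cst n (v ^+ l.+1) * eL n (brk n (k %/ 2 ^ l)%N) * eR n (brk n (k %/ 2 ^ l)%N)
       * \prod_(l' < l) (eL n (brk n (k %/ 2 ^ l')%N) + eR n (brk n (k %/ 2 ^ l')%N)).

Definition coprod_gen (n i : nat) : Tens n :=
  eL n (2 * i + 1)%N + eR n (2 * i + 1)%N + redcoprod n i.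

(* Structure constants: Delta(e^t) = sum_{t1,t2} coprod_coef t t1 t2 e^t1 (x) e^t2.
   Delta is multiplicative; reduction modulo the monomial relations
   e_{2i+1}^{2^{k_i}} = 0 keeps exactly the coefficients of admissible monomials. *)
Definition coprod_coef (n : nat) (t t1 t2 : basis n) : K :=
  ((\prod_(i < Ngen n) coprod_gen n i ^+ (val t i : nat)) @_ (mnm_of t1)) @_ (mnm_of t2).

(* The dual K(n)^*(SO_m)^vee, identified (via the dual basis) with functions
   from the monomial basis to the coefficient ring; multiplication dual to Delta. *)
Notation dual n := {ffun basis n -> K}.
Definition dual_elt (n : nat) (f : dual n) : Prop := forall b, laurent (f b).
Definition dmul (n : nat) (f g : dual n) : dual n :=
  [ffun t => \sum_(t1 : basis n) \sum_(t2 : basis n) coprod_coef t t1 t2 * f t1 * g t2].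
(* unit of the dual algebra = counit of K(n)^*(SO_m): e^0 |-> 1, e^t |-> 0 else *)
Definition dunit (n : nat) : dual n :=
  [ffun t : basis n => if [forall i, (val t i : nat) == 0%N :> nat] then 1 else 0].
(* alpha_{2^n-1}: dual basis element of the monomial e_{2^n-1}
   (generator index 2^(n-1)-1, exponent 1, all other exponents 0). *)
Definition alpha_top (n : nat) : dual n :=
  [ffun t : basis n => if [forall i, (val t i : nat) == ((i : nat) == (2 ^ n.-1).-1)%N :> nat]
                       then 1 else 0].
Definition dual_idem (n : nat) (f : dual n) : Prop := dmul f f = f.
Definition vinv_alpha (n : nat) : dual n := [ffun t => v^-1 * alpha_top n t].

(* Main.v *)
Require Import Defs.
From HB Require Import structures.
From mathcomp Require Import all_boot all_order all_algebra.
From mathcomp Require Import fraction.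
From mathcomp Require Import mpoly.
Import GRing.Theory.
Local Open Scope ring_scope.
Lemma two_K : (1 + 1 : K) = 0.
Proof.
have -> : (1 + 1 : K) = tofracP (1 + 1) by rewrite rmorphD rmorph1.
have -> : (1 + 1 : {poly 'F_2}) = 0.
  by rewrite -polyCD; have -> : (1 + 1 : 'F_2) = 0 by apply/val_inj. 
by rewrite rmorph0.
Qed.

Lemma two_R (R : nzRingType) (h : {rmorphism K -> R}) (x : R) : x + x = 0.
Proof.
by rewrite -[x]mul1r -mulrDl -(rmorph1 h) -rmorphD two_K rmorph0 mul0r.
Qed.

Lemma sym2 {R : nzRingType} (T : finType) (h : {rmorphism K -> R}) (F : T -> T -> R) :
  (forall a b, F a b = F b a) ->
  \sum_a \sum_b F a b = \sum_a F a a.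
Proof.
move=> Fs.
have E : forall a, \sum_b F a b = F a a + \sum_(b | (enum_rank b < enum_rank a)%N) F a b
                                        + \sum_(b | (enum_rank a < enum_rank b)%N) F a b.
  move=> a; rewrite (bigD1 a) //= -addrA; congr (_ + _).
  rewrite (bigID (fun b => (enum_rank b < enum_rank a)%N)) /=; congr (_ + _).
    by apply: eq_bigl => b; case: eqP => [->|]; rewrite ?ltnn ?andbF ?andbT.
  apply: eq_bigl => b; rewrite -leqNgt leq_eqVlt.
  case: (eqVneq b a) => [->|ne]; first by rewrite ltnn eqxx.
  rewrite /= [X in X || _](_ : _ = false) //; apply/negbTE.
  by apply: contra ne => /eqP /val_inj /enum_rank_inj ->.
rewrite (eq_bigr _ (fun a _ => E a)) !big_split /=.
rewrite -addrA; set Y := \sum_i \sum_(b | _) _.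
set Z := \sum_i \sum_(b | _) _.
suff -> : Z = Y by rewrite (two_R _ h) addr0.
rewrite /Z /Y (exchange_big_dep xpredT) //=.
by apply: eq_bigr => a _; apply: eq_bigr => b _; rewrite Fs.
Qed.
Section Tensor.
Variable G : nat.
Local Notation A := {mpoly K[G]}.
Local Notation TT := {mpoly A[G]}.

Definition iota : {rmorphism K -> TT} := (@mpolyC G A) \o (@mpolyC G K).
Definition rho : {rmorphism A -> TT} := mmap iota (fun i => 'X_i).
Definition sig : {rmorphism TT -> TT} := mmap rho (fun i => ('X_i : A)%:MP).
Definition th : {rmorphism TT -> A} := mmap (idfun : {rmorphism A -> A}) (fun i => 'X_i).

Definition bnd (P : TT) : nat := (msize P + \max_(a <- msupp P) msize (P@_a))%N.

Lemma bnd1 P k : (bnd P <= k)%N -> (msize P <= k)%N.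
Proof. by apply: leq_trans; rewrite leq_addr. Qed.

Lemma bnd2 P k a : (bnd P <= k)%N -> (msize (P@_a) <= k)%N.
Proof.
move=> h; apply: leq_trans h.
case: (boolP (a \in msupp P)) => [ha|/memN_msupp_eq0 ->]; last by rewrite msize0.
apply: leq_trans (leq_addl _ _).
by apply: (@leq_bigmax_seq _ _ _ (fun a => msize P@_a)).
Qed.

Lemma DE (P : TT) k : (bnd P <= k)%N ->
  P = \sum_(a : 'X_{1..G < k}) \sum_(b : 'X_{1..G < k})
        ((P@_a@_b *: 'X_[b]) %:MP * 'X_[a]).
Proof.
move=> hk; rewrite {1}(mpolywE (k:=k) (p:=P)); last exact: bnd1.
apply: eq_bigr => a _.
rewrite {1}(mpolywE (k:=k) (p:=P@_a)); last exact: bnd2 hk.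
by rewrite -mul_mpolyC rmorph_sum mulr_suml.
Qed.

Lemma sig_X (m : 'X_{1..G}) : sig 'X_[m] = ('X_[m] : A)%:MP.
Proof.
rewrite /sig /=.
rewrite mmapX.
rewrite /mmap1 [in RHS]mpolyXE_id rmorph_prod.
by apply: eq_bigr => i _; rewrite rmorphXn.
Qed.
Lemma sig_term (c : K) (a b : 'X_{1..G}) :
  sig ((c *: 'X_[b]) %:MP * 'X_[a]) = ((c *: 'X_[a]) %:MP * 'X_[b]).
Proof.
rewrite rmorphM sig_X.
have -> : sig (c *: 'X_[b])%:MP = rho (c *: 'X_[b]) by rewrite /sig /= mmapC.
rewrite /rho /= mmapZ mmapX /mmap1 -[\prod_(i < G) _]mpolyXE_id.
rewrite -mulrA [_ * (_%:MP)]mulrC mulrA; congr (_ * _).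
by rewrite /iota /= -rmorphM mul_mpolyC.
Qed.

Lemma th_term (c : K) (a b : 'X_{1..G}) :
  th ((c *: 'X_[b]) %:MP * 'X_[a]) = c *: 'X_[a + b].
Proof.
rewrite rmorphM /th /= mmapC mmapX /mmap1 -[\prod_(i < G) _]mpolyXE_id /=.
by rewrite mpolyXD -scalerAl mulrC.
Qed.
Lemma coef_term (c : K) (a b a0 b0 : 'X_{1..G}) :
  ((c *: 'X_[a]) %:MP * 'X_[b] : TT)@_a0@_b0 = c * (a == b0)%:R * (b == a0)%:R.
Proof.
rewrite mcoeffCM mcoeffX; case: eqP => _; last by rewrite mulr0 mcoeff0 mulr0.
by rewrite !mulr1 mcoeffZ mcoeffX.
Qed.

Lemma sum_pick (R : nzRingType) k (a0 : 'X_{1..G}) (F : 'X_{1..G} -> R) :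
  (mdeg a0 < k)%N ->
  \sum_(a : 'X_{1..G < k}) F a * ((a : 'X_{1..G}) == a0)%:R = F a0.
Proof.
move=> h; rewrite (bigD1 (BMultinom h)) //= eqxx mulr1 big1 ?addr0 //.
move=> a ne; case: eqP => [e|]; last by rewrite mulr0.
by case/eqP: ne; apply/val_inj.
Qed.

Lemma sig_coef (P : TT) a0 b0 : (sig P)@_a0@_b0 = P@_b0@_a0.
Proof.
pose k := (bnd P + mdeg a0 + mdeg b0).+1.
have hk : (bnd P <= k)%N by rewrite /k -addnA leqW // leq_addr.
have ha : (mdeg a0 < k)%N by rewrite /k ltnS addnAC leq_addl.
have hb : (mdeg b0 < k)%N by rewrite /k ltnS leq_addl.
rewrite {1}(@DE P k hk) rmorph_sum.
rewrite (eq_bigr (fun a : 'X_{1..G < k} => \sum_(b : 'X_{1..G < k})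
   ((P@_a@_b *: 'X_[a])%:MP * 'X_[b]))); last first.
  by move=> a _; rewrite rmorph_sum; apply: eq_bigr => b _; apply: sig_term.
rewrite !raddf_sum.
rewrite (eq_bigr (fun a : 'X_{1..G < k} => P@_a@_a0 * ((a : 'X_{1..G}) == b0)%:R)); last first.
  move=> a _; rewrite !raddf_sum.
  rewrite (eq_bigr (fun b : 'X_{1..G < k} => P@_a@_b * ((a : 'X_{1..G}) == b0)%:R
       * ((b : 'X_{1..G}) == a0)%:R)); last by move=> b _; exact: coef_term.
  exact: (@sum_pick _ k a0 (fun b => P@_a@_b * ((a : 'X_{1..G}) == b0)%:R) ha).
exact: (@sum_pick _ k b0 (fun a => P@_a@_a0) hb).
Qed.
Lemma mnm_double (a s : 'X_{1..G}) : ((a + a)%MM == (s + s)%MM) = (a == s).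
Proof.
apply/eqP/eqP => [/mnmP h|->//]; apply/mnmP => i.
by have := h i; rewrite !mnmDE !addnn => /double_inj.
Qed.

Lemma th_diag (P : TT) s : (forall a b, P@_a@_b = P@_b@_a) ->
  (th P)@_(s + s) = P@_s@_s.
Proof.
move=> Ps.
pose k := (bnd P + mdeg s).+1.
have hk : (bnd P <= k)%N by rewrite /k leqW // leq_addr.
have hs : (mdeg s < k)%N by rewrite /k ltnS leq_addl.
rewrite {1}(@DE P k hk) rmorph_sum.
rewrite (eq_bigr (fun a : 'X_{1..G < k} => \sum_(b : 'X_{1..G < k})
   (P@_a@_b *: ('X_[a + b] : A)))); last first.
  by move=> a _; rewrite rmorph_sum; apply: eq_bigr => b _; apply: th_term.
rewrite (sym2 _ (mpolyC G (R := K) : {rmorphism K -> A})); last first.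
  by move=> a b; rewrite Ps addmC.
rewrite raddf_sum.
rewrite (eq_bigr (fun a : 'X_{1..G < k} => P@_a@_a * ((a : 'X_{1..G}) == s)%:R)); last first.
  by move=> a _; rewrite /= mcoeffZ mcoeffX mnm_double.
exact: (@sum_pick _ k s (fun a => P@_a@_a) hs).
Qed.
End Tensor.
Arguments sig {G}. Arguments th {G}. Arguments rho {G}. Arguments iota {G}.
Section Gens.
Variable n : nat.
Local Notation G := (Ngen n).
Local Notation A := {mpoly K[G]}.

Definition mono (s : nat) : 'X_{1..G} := (U_(inord (idx s)) *+ (2 ^ logn 2 s))%MM.
Definition E (s : nat) : A := 'X_[mono s].

Lemma E_def s : E s = 'X_(inord (idx s)) ^+ (2 ^ logn 2 s).
Proof. by rewrite /E /mono mpolyXn. Qed.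

Lemma sig_eL s : sig (eL n s) = eR n s.
Proof. by rewrite /eL /eR rmorphXn sig_X -rmorphXn. Qed.

Lemma sig_eR s : sig (eR n s) = eL n s.
Proof.
rewrite /eR /eL /sig /= mmapC /rho /= rmorphXn /=.
by rewrite mmapX mmap1U.
Qed.

Lemma sig_cst c : sig (cst n c) = cst n c.
Proof. by rewrite /cst /sig /= mmapC /rho /= mmapC. Qed.

Lemma th_eL s : th (eL n s) = E s.
Proof. by rewrite /eL rmorphXn /th /= mmapX mmap1U E_def. Qed.

Lemma th_eR s : th (eR n s) = E s.
Proof. by rewrite /eR /th /= mmapC E_def. Qed.

Lemma th_cst c : th (cst n c) = c%:MP.
Proof. by rewrite /cst /th /= mmapC. Qed.
End Gens.
Lemma comm3 (R : comNzRingType) (a b c : R) : a * c * b = a * b * c.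
Proof. by rewrite mulrAC. Qed.

Lemma sig_red n i : sig (redcoprod n i) = redcoprod n i.
Proof.
rewrite /redcoprod; case: ifP => _.
  rewrite !rmorphM sig_cst sig_eL sig_eR; exact: comm3.
rewrite rmorph_sum; apply: eq_bigr => l _.
rewrite !rmorphM rmorph_prod sig_cst sig_eL sig_eR.
apply: (congr2 (fun x y => x * y)); first exact: comm3.
apply: eq_bigr => l' _.
rewrite rmorphD sig_eL sig_eR; exact: addrC.
Qed.

Lemma sig_cg n i : sig (coprod_gen n i) = coprod_gen n i.
Proof.
rewrite /coprod_gen !rmorphD sig_eL sig_eR sig_red.
apply: (congr2 (fun x y => x + y)) => //; exact: addrC.
Qed.
From mathcomp Require Import zify.
Lemma Ngen_eq n : Ngen n = (2 ^ n.-1)%N.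
Proof. by rewrite /Ngen prednK // expn_gt0. Qed.

Lemma exp_split n : (1 <= n)%N -> (2 ^ n = 2 ^ n.-1 + 2 ^ n.-1)%N.
Proof. by case: n => // n _; rewrite expnS /= mul2n addnn. Qed.

Lemma top_eq n i : (1 <= n)%N -> (2 * i + 1 == 2 ^ n - 1)%N -> (2 * i + 1 = 2 ^ n.-1 + i)%N.
Proof.
move=> hn /eqP; rewrite (exp_split _ hn).
have := expn_gt0 2 n.-1; lia.
Qed.

Lemma s0_eq n i : (1 <= n)%N -> (i < 2 ^ n.-1)%N -> (2 * i + 1 != 2 ^ n - 1)%N ->
  brk n ((brk n (2 * i + 1))./2) = (2 ^ n.-1 + i)%N.
Proof.
move=> hn hi hj; rewrite /brk.
have -> : (2 ^ n - 1 - (2 * i + 1) = (2 ^ n.-1 - 1 - i) * 2)%N.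
  move: hj; rewrite (exp_split _ hn); lia.
rewrite muln2 doubleK (exp_split _ hn); lia.
Qed.
Lemma sumform_abs (R S : comNzRingType) (phi : {rmorphism R -> S}) m
  (a x y : nat -> R) :
  (forall l, phi (x l) + phi (y l) = 0) ->
  phi (\sum_(l < m.+1) a l * x l * y l * \prod_(l' < l) (x l' + y l'))
  = phi (a 0%N) * phi (x 0%N) * phi (y 0%N).
Proof.
move=> hxy; rewrite rmorph_sum big_ord_recl /= big_ord0 mulr1 big1 ?addr0.
  by rewrite !rmorphM.
move=> l _; rewrite /= big_ord_recl /= !rmorphM rmorphD hxy.
by rewrite mul0r mulr0.
Qed.

Lemma th_cg n i : (1 <= n)%N -> (i < Ngen n)%N ->
  th (coprod_gen n i) = v%:MP * E n (2 ^ n.-1 + i) * E n (2 ^ n.-1 + i).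
Proof.
move=> hn hi; have hi2 : (i < 2 ^ n.-1)%N by rewrite -Ngen_eq.
rewrite /coprod_gen !rmorphD th_eL th_eR.
rewrite (two_R _ (mpolyC _ (R := K) : {rmorphism K -> _})) add0r.
rewrite /redcoprod; case: ifP => hj.
  by rewrite !rmorphM th_cst th_eL th_eR (top_eq _ _ hn hj).
rewrite (sumform_abs _ _ th _ (fun l => cst n (v ^+ l.+1))
   (fun l => eL n (brk n ((brk n (2 * i + 1))./2 %/ 2 ^ l)))
   (fun l => eR n (brk n ((brk n (2 * i + 1))./2 %/ 2 ^ l)))); last first.
  by move=> l; rewrite th_eL th_eR (two_R _ (mpolyC _ (R := K) : {rmorphism K -> _})).
by rewrite th_cst th_eL th_eR expn0 divn1 expr1 (s0_eq _ _ hn hi2) ?hj.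
Qed.
Definition phi n (e : 'I_(Ngen n) -> nat) : 'X_{1..Ngen n} :=
  \big[@mnm_add _/0%MM]_(i < Ngen n) (mono n (2 ^ n.-1 + i) *+ e i)%MM.

Lemma X_prod G (F : 'I_G -> 'X_{1..G}) :
  \prod_(i < G) ('X_[F i] : {mpoly K[G]}) = 'X_[\big[@mnm_add _/0%MM]_(i < G) F i].
Proof. by rewrite (big_morph (fun m => ('X_[m] : {mpoly K[G]})) (@mpolyXD _ _) (@mpolyX0 _ _)). Qed.

Lemma th_Delta n (e : 'I_(Ngen n) -> nat) : (1 <= n)%N ->
  th (\prod_(i < Ngen n) coprod_gen n i ^+ e i)
  = (v ^+ (\sum_i e i))%:MP * 'X_[phi n e + phi n e].
Proof.
move=> hn; rewrite rmorph_prod.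
rewrite (eq_bigr (fun i : 'I_(Ngen n) => (v ^+ e i)%:MP *
    'X_[(mono n (2 ^ n.-1 + i) + mono n (2 ^ n.-1 + i)) *+ e i])); last first.
  move=> i _; rewrite rmorphXn th_cg // /E -mulrA -mpolyXD exprMn -rmorphXn.
  by rewrite mpolyXn.
rewrite big_split /= -rmorph_prod prodrXr X_prod; congr (_ * 'X_[_]).
apply/mnmP => j; rewrite mnmDE !mnm_sumE -big_split /=.
apply: eq_bigr => i _; rewrite /mono !mulmnE !mnmDE !mulmnE; exact: mulnDl.
Qed.
Lemma Dsym n (e : 'I_(Ngen n) -> nat) a b :
  (\prod_(i < Ngen n) coprod_gen n i ^+ e i : Tens n)@_a@_b
  = (\prod_(i < Ngen n) coprod_gen n i ^+ e i : Tens n)@_b@_a.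
Proof.
have hs : sig (\prod_(i < Ngen n) coprod_gen n i ^+ e i : Tens n)
          = \prod_(i < Ngen n) coprod_gen n i ^+ e i.
  rewrite rmorph_prod; apply: eq_bigr => i _; by rewrite rmorphXn sig_cg.
by rewrite -[in LHS]hs sig_coef.
Qed.

Lemma Ddiag n (e : 'I_(Ngen n) -> nat) s : (1 <= n)%N ->
  (\prod_(i < Ngen n) coprod_gen n i ^+ e i : Tens n)@_s@_s
  = v ^+ (\sum_i e i) * ((phi n e == s) : bool)%:R.
Proof.
move=> hn; rewrite -th_diag; last exact: Dsym.
by rewrite th_Delta // mcoeffCM mcoeffX mnm_double.
Qed.
Definition tsz n (t : Defs.basis n) : nat := \sum_i (val t i : nat).
Definition phit n (t : Defs.basis n) := phi n (fun i => val t i : nat).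

Arguments tsz {n}. Arguments phit {n}.
Lemma coef_sym n (t t1 t2 : Defs.basis n) : coprod_coef t t1 t2 = coprod_coef t t2 t1.
Proof. exact: Dsym. Qed.

Lemma coef_diag n (t s : Defs.basis n) : (1 <= n)%N ->
  coprod_coef t s s = v ^+ tsz t * ((phit t == mnm_of s) : bool)%:R.
Proof. move=> hn; exact: Ddiag. Qed.

Lemma dmul_sq n (f : dual n) t : (1 <= n)%N ->
  dmul f f t = v ^+ tsz t * \sum_(s : Defs.basis n) ((phit t == mnm_of s) : bool)%:R * (f s * f s).
Proof.
move=> hn; rewrite /dmul ffunE.
rewrite (sym2 _ (idfun : {rmorphism K -> K})); last first.
  by move=> a b; rewrite coef_sym -!mulrA [f a * _]mulrC.
rewrite mulr_sumr; apply: eq_bigr => s _.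
by rewrite coef_diag // !mulrA.
Qed.
Lemma odd_part s : (0 < s)%N -> (s = 2 ^ logn 2 s * (2 * idx s + 1))%N.
Proof.
move=> s0; have [m cm hs] := pfactor_coprime (isT : prime 2) s0.
have om : odd m by rewrite -coprimen2 coprime_sym.
rewrite /idx; move: hs; set L := logn 2 s => hs.
rewrite {2}hs mulnK ?expn_gt0 //.
have := odd_double_half m; rewrite om -muln2 => hm.
rewrite {1}hs mulnC; congr (_ * _)%N; lia.
Qed.

Lemma idx_lt n s : (1 <= n)%N -> (0 < s)%N -> (s < 2 ^ n)%N -> (idx s < Ngen n)%N.
Proof.
move=> hn s0 sn; rewrite Ngen_eq.
have h := odd_part _ s0; have e := expn_gt0 2 (logn 2 s).
have h2 : (2 * idx s + 1 <= s)%N.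
  by rewrite {2}h; apply: leq_pmull.
move: sn; rewrite (exp_split _ hn); lia.
Qed.

Definition dm G (m : 'X_{1..G}) : nat := \sum_(j < G) m j * (2 * j + 1).
Arguments dm {G}.

Lemma dm_add G (m1 m2 : 'X_{1..G}) : dm (m1 + m2)%MM = (dm m1 + dm m2)%N.
Proof. by rewrite /dm -big_split; apply: eq_bigr => j _; rewrite mnmDE mulnDl. Qed.

Lemma dm0 G : dm (0%MM : 'X_{1..G}) = 0%N.
Proof. by rewrite /dm big1 // => j _; rewrite mnm0E. Qed.

Lemma dm_muln G (m : 'X_{1..G}) k : dm (m *+ k)%MM = (dm m * k)%N.
Proof. by rewrite /dm big_distrl; apply: eq_bigr => j _; rewrite mulmnE mulnAC. Qed.

Lemma dm_U G (o : 'I_G) : dm U_(o)%MM = (2 * o + 1)%N.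
Proof.
rewrite /dm (bigD1 o) //= mnm1E eqxx mul1n big1 ?addn0 // => j ne.
by rewrite mnm1E eq_sym (negbTE ne) mul0n.
Qed.

Lemma dm_sum G (F : 'I_G -> 'X_{1..G}) :
  dm (\big[@mnm_add _/0%MM]_(i < G) F i) = (\sum_(i < G) dm (F i))%N.
Proof. exact: (big_morph _ (@dm_add G) (@dm0 G)). Qed.

Lemma inord_idx n s : (1 <= n)%N -> (0 < s)%N -> (s < 2 ^ n)%N ->
  (inord (idx s) : 'I_(Ngen n)) = idx s :> nat.
Proof. by move=> hn s0 sn; rewrite inordK // (idx_lt _ _ hn s0 sn). Qed.

Lemma dm_mono n s : (1 <= n)%N -> (0 < s)%N -> (s < 2 ^ n)%N -> dm (mono n s) = s.
Proof.
move=> hn s0 sn; rewrite /mono dm_muln dm_U (inord_idx _ _ hn s0 sn) mulnC.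
by rewrite -(odd_part _ s0).
Qed.
Definition top n : 'I_(Ngen n) := ord_max.
Definition Zb n (t : Defs.basis n) : bool := [forall i, (val t i : nat) == 0%N :> nat].
Definition Tb n (t : Defs.basis n) : bool :=
  [forall i, (val t i : nat) == ((i : nat) == (2 ^ n.-1).-1)%N :> nat].
Arguments Zb {n}. Arguments Tb {n}.

Lemma top_val n : (1 <= n)%N -> (top n : nat) = (2 ^ n.-1 - 1)%N.
Proof. by move=> _; rewrite /top /= subn1. Qed.

Lemma kexp_top n : (1 <= n)%N -> kexp n (top n) = 1%N.
Proof.
move=> hn; rewrite /kexp top_val //.
have e := expn_gt0 2 n.-1.
have -> : (2 ^ n.+1 - 2 = 2 * (2 * (2 ^ n.-1 - 1) + 1))%N.
  rewrite expnS (exp_split _ hn); lia.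
rewrite mulnK; last by lia.
exact: trunc_lognn.
Qed.

Lemma mnm_ofE n (b : Defs.basis n) j : mnm_of b j = val b j.
Proof. by rewrite /mnm_of mnmE. Qed.

Lemma mnm_of_inj n (s1 s2 : Defs.basis n) : mnm_of s1 = mnm_of s2 -> s1 = s2.
Proof.
move=> h; apply: val_inj; apply/ffunP => i; apply: val_inj.
by have := congr1 (fun m : 'X_{1..Ngen n} => m i) h; rewrite /= !mnm_ofE.
Qed.

Lemma dm_mnm n (b : Defs.basis n) : dm (mnm_of b) = (\sum_i val b i * (2 * i + 1))%N.
Proof. by apply: eq_bigr => j _; rewrite mnm_ofE. Qed.

Lemma Pi_bounds n (i : 'I_(Ngen n)) : (1 <= n)%N ->
  (0 < 2 ^ n.-1 + i)%N /\ (2 ^ n.-1 + i < 2 ^ n)%N.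
Proof.
move=> hn; have hi : (i < 2 ^ n.-1)%N by rewrite -Ngen_eq.
have := exp_split _ hn.
have := expn_gt0 2 n.-1; lia.
Qed.

Lemma dm_phit n (t : Defs.basis n) : (1 <= n)%N ->
  dm (phit t) = (\sum_i val t i * (2 ^ n.-1 + i))%N.
Proof.
move=> hn; rewrite /phit /phi dm_sum; apply: eq_bigr => i _.
have [h1 h2] := Pi_bounds _ i hn.
by rewrite dm_muln (dm_mono _ _ hn h1 h2) mulnC.
Qed.
Lemma top_supp n (t : Defs.basis n) : (1 <= n)%N ->
  (forall i, i != top n -> (val t i : nat) = 0%N) -> Zb t || Tb t.
Proof.
move=> hn h; have := forallP (valP t) (top n); rewrite kexp_top // expn1.
have hne : forall i : 'I_(Ngen n), i != top n -> ((i : nat) == (2 ^ n.-1).-1)%N = false.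
  by move=> i ne; apply/negbTE; apply: contra ne => /eqP e; apply/eqP/val_inj.
case e : (val t (top n) : nat) => [|[|//]] _.
  apply/orP; left; apply/forallP => i.
  by case: (eqVneq i (top n)) => [->|ne]; rewrite ?e ?h.
apply/orP; right; apply/forallP => i.
case: (eqVneq i (top n)) => [->|ne]; first by rewrite e /top /= eqxx.
by rewrite h // hne.
Qed.

Lemma incr n (t : Defs.basis n) : (1 <= n)%N -> ~~ (Zb t || Tb t) ->
  (dm (mnm_of t) < dm (phit t))%N.
Proof.
move=> hn nzt.
case: (boolP [exists i, (i != top n) && ((val t i : nat) != 0%N)]); last first.
  move/existsPn => H; case/negP: nzt; apply: top_supp => // i ne.
  by have := H i; rewrite ne /= negbK => /eqP.
case/existsP => i /andP [ne ti].
rewrite dm_mnm dm_phit // (bigD1 i) //= [X in (_ < X)%N](bigD1 i) //=.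
have hi : (i < 2 ^ n.-1 - 1)%N.
  have e1 : (i < 2 ^ n.-1)%N by rewrite -Ngen_eq.
  have e2 : (i : nat) != (2 ^ n.-1 - 1)%N.
    by rewrite -(top_val _ hn); apply: contra ne => /eqP e; apply/eqP/val_inj.
  lia.
have h1 : (val t i * (2 * i + 1) < val t i * (2 ^ n.-1 + i))%N.
  by rewrite ltn_pmul2l ?lt0n //; lia.
have h2 : (\sum_(j | j != i) val t j * (2 * j + 1) <=
           \sum_(j | j != i) val t j * (2 ^ n.-1 + j))%N.
  apply: leq_sum => j _; apply: leq_mul => //.
  have e1 : (j < 2 ^ n.-1)%N by rewrite -Ngen_eq.
  lia.
rewrite -addSn; exact: leq_add h1 h2.
Qed.
Lemma phit_comp n (t : Defs.basis n) j :
  phit t j = (\sum_(k < Ngen n) mono n (2 ^ n.-1 + k) j * val t k)%N.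
Proof. by rewrite /phit /phi mnm_sumE; apply: eq_bigr => k _; rewrite mulmnE. Qed.

Lemma L12 n (t s : Defs.basis n) : (1 <= n)%N ->
  phit t = mnm_of s -> Zb s || Tb s -> Zb t || Tb t.
Proof.
move=> hn hts /orP [zs|ts].
  have h0 : dm (phit t) = 0%N.
    rewrite hts dm_mnm big1 // => j _.
    by have := forallP zs j => /eqP ->.
  move: h0; rewrite dm_phit // => /eqP; rewrite sum_nat_eq0 => /forallP H.
  apply/orP; left; apply/forallP => i.
  have := H i; rewrite /= muln_eq0 => /orP [//|]; by rewrite addn_eq0 expn_eq0.
apply: top_supp => // i ne.
have [h1 h2] := Pi_bounds _ i hn.
pose o : 'I_(Ngen n) := inord (idx (2 ^ n.-1 + i)).
have ho : (o : nat) = idx (2 ^ n.-1 + i) by exact: inord_idx.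
have hot : ((o : nat) == (2 ^ n.-1).-1)%N = false.
  apply/negbTE/negP => /eqP e.
  have := odd_part _ h1; rewrite -ho e.
  have := expn_gt0 2 (logn 2 (2 ^ n.-1 + i)).
  set d := (2 ^ logn 2 _)%N => dpos hP.
  have : (2 * (2 ^ n.-1).-1 + 1 <= 2 ^ n.-1 + i)%N by rewrite {1}hP leq_pmull.
  have e1 : (i < 2 ^ n.-1)%N by rewrite -Ngen_eq.
  have e2 : (i : nat) != (2 ^ n.-1 - 1)%N.
    by rewrite -(top_val _ hn); apply: contra ne => /eqP e'; apply/eqP/val_inj.
  have := expn_gt0 2 n.-1; lia.
have hs : phit t o = 0%N.
  by rewrite hts mnm_ofE; have := forallP ts o; rewrite hot => /eqP.
move: hs; rewrite phit_comp (bigD1 i) //= => /eqP; rewrite addn_eq0 => /andP [/eqP].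
rewrite /mono mulmnE mnm1E eqxx mul1n => /eqP; rewrite muln_eq0 expn_eq0 /= => /eqP //.
Qed.
Lemma pos2n n : (0 < 2 ^ n)%N. Proof. by rewrite expn_gt0. Qed.
Lemma one_lt n : (1 <= n)%N -> (1 < 2 ^ n)%N.
Proof. by move=> hn; rewrite -{1}(expn0 2) ltn_exp2l. Qed.

Lemma zb_adm n : admissible [ffun _ : 'I_(Ngen n) => Ordinal (pos2n n)].
Proof. by apply/forallP => i; rewrite ffunE /= expn_gt0. Qed.
Definition zb n : Defs.basis n := @exist _ (@admissible n) _ (zb_adm n).

Lemma tau_adm n (hn : (1 <= n)%N) :
  admissible [ffun i : 'I_(Ngen n) =>
               if i == top n then Ordinal (one_lt _ hn) else Ordinal (pos2n n)].
Proof.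
apply/forallP => i; rewrite ffunE; case: eqP => [->|_] /=; last by rewrite expn_gt0.
by rewrite kexp_top.
Qed.
Definition taub n (hn : (1 <= n)%N) : Defs.basis n := @exist _ (@admissible n) _ (tau_adm _ hn).

Lemma Zb_zb n : Zb (zb n).
Proof. by apply/forallP => i; rewrite /= ffunE. Qed.

Lemma Tb_taub n hn : Tb (taub n hn).
Proof.
apply/forallP => i; rewrite /= ffunE.
case: (eqVneq i (top n)) => [->|ne] /=; first by rewrite eqxx.
suff -> : ((i : nat) == (2 ^ n.-1).-1) = false by [].
by apply/negbTE; apply: contra ne => /eqP e; apply/eqP/val_inj.
Qed.

Lemma Zb_uniq n (t : Defs.basis n) : Zb t -> t = zb n.
Proof.
move=> zt; apply: val_inj; apply/ffunP => i; apply: val_inj.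
by rewrite /= ffunE /=; have := forallP zt i => /eqP.
Qed.

Lemma Tb_uniq n hn (t : Defs.basis n) : Tb t -> t = taub n hn.
Proof.
move=> tt; apply: val_inj; apply/ffunP => i; apply: val_inj.
rewrite /= ffunE; have := forallP tt i => /eqP ->.
case: (eqVneq i (top n)) => [->|ne] /=; first by rewrite eqxx.
suff -> : ((i : nat) == (2 ^ n.-1).-1) = false by [].
by apply/negbTE; apply: contra ne => /eqP e; apply/eqP/val_inj.
Qed.

Lemma ZT_excl n (t : Defs.basis n) : Zb t -> Tb t -> False.
Proof.
move=> zt tt; have := forallP zt (top n); have := forallP tt (top n).
by move=> /eqP -> /=; rewrite eqxx.
Qed.

Lemma tsz_zb n : tsz (zb n) = 0%N.
Proof. by rewrite /tsz big1 // => i _; rewrite /= ffunE. Qed.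

Lemma tsz_taub n hn : tsz (taub n hn) = 1%N.
Proof.
rewrite /tsz (bigD1 (top n)) //= ffunE eqxx /= big1 // => i ne.
by rewrite ffunE (negbTE ne).
Qed.

Lemma phit_zb n : phit (zb n) = mnm_of (zb n).
Proof.
apply/mnmP => j; rewrite phit_comp mnm_ofE /= ffunE /= big1 // => k _.
by rewrite ffunE muln0.
Qed.

Lemma mono_top n : (1 <= n)%N -> mono n (2 ^ n.-1 + top n) = U_(top n)%MM.
Proof.
move=> hn; have e := expn_gt0 2 n.-1.
have hs : (2 ^ n.-1 + top n = 2 * (top n) + 1)%N by rewrite top_val //; lia.
have hodd : odd (2 ^ n.-1 + top n) by rewrite hs oddD oddM.
have hl : logn 2 (2 ^ n.-1 + top n) = 0%N.
  by apply: logn_coprime; rewrite coprime_sym coprimen2.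
have hi : idx (2 ^ n.-1 + top n) = top n.
  by rewrite /idx hl expn0 divn1 hs addn1 mul2n /= uphalf_double.
rewrite /mono hl expn0; apply/mnmP => j; rewrite mulmnE muln1.
suff -> : (inord (idx (2 ^ n.-1 + top n)) : 'I_(Ngen n)) = top n by [].
by apply: val_inj; rewrite /= hi inordK.
Qed.
Lemma phit_taub n hn : phit (taub n hn) = mnm_of (taub n hn).
Proof.
apply/mnmP => j; rewrite phit_comp mnm_ofE (bigD1 (top n)) //= big1 ?addn0; last first.
  by move=> k ne; rewrite ffunE (negbTE ne) muln0.
rewrite !ffunE eqxx /= muln1 mono_top // mnm1E.
by rewrite eq_sym; case: (j == top n).
Qed.

Lemma v_neq0 : v != 0.
Proof. by rewrite /v tofrac_eq0 polyX_eq0. Qed.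

Lemma oppK2 (x : K) : - x = x.
Proof.
by apply/eqP; rewrite eq_sym -addr_eq0 (two_R _ (idfun : {rmorphism K -> K})).
Qed.

Lemma sum_pick_b n (m : 'X_{1..Ngen n}) (s0 : Defs.basis n) (g : Defs.basis n -> K) :
  m = mnm_of s0 ->
  \sum_(s : Defs.basis n) ((m == mnm_of s) : bool)%:R * g s = g s0.
Proof.
move=> ->; rewrite (bigD1 s0) //= eqxx mul1r big1 ?addr0 // => s ne.
case: eqP => [e|]; last by rewrite mul0r.
by case/eqP: ne; apply: mnm_of_inj.
Qed.

Lemma dunitE n (t : Defs.basis n) : dunit n t = (Zb t)%:R.
Proof. by rewrite /dunit /Zb ffunE; case: ifP. Qed.

Lemma vinvE n (t : Defs.basis n) : vinv_alpha n t = v^-1 * (Tb t)%:R.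
Proof. by rewrite /vinv_alpha /alpha_top /Tb !ffunE; case: ifP. Qed.

Lemma form_idem n (hn : (1 <= n)%N) (f : dual n) (a b : K) :
  (forall t, f t = (Zb t)%:R * a + (Tb t)%:R * b) ->
  a * a = a -> v * (b * b) = b -> dual_idem f.
Proof.
move=> hf ha hb; apply/ffunP => t; rewrite dmul_sq //.
case: (boolP (Zb t)) => zt.
  rewrite (Zb_uniq _ _ zt) tsz_zb expr0 mul1r (@sum_pick_b n _ _ _ (phit_zb n)) hf Zb_zb.
  have -> : Tb (zb n) = false by apply/negP => tt; exact: ZT_excl _ _ (Zb_zb n) tt.
  by rewrite mul1r mul0r addr0 ha.
case: (boolP (Tb t)) => tt.
  rewrite (Tb_uniq _ hn _ tt) tsz_taub expr1 (@sum_pick_b n _ _ _ (phit_taub n hn)) hf Tb_taub.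
  have -> : Zb (taub n hn) = false by apply/negP => zt'; exact: ZT_excl _ _ zt' (Tb_taub n hn).
  by rewrite mul1r mul0r add0r hb.
rewrite hf (negbTE zt) (negbTE tt) !mul0r addr0 big1 ?mulr0 // => s _.
case: eqP => [e|]; last by rewrite mul0r.
case: (boolP (Zb s || Tb s)) => h.
  by have := L12 _ _ _ hn e h; rewrite (negbTE zt) (negbTE tt).
move: h; rewrite negb_or => /andP [zs ts].
by rewrite hf (negbTE zs) (negbTE ts) /= mul1r !mul0r addr0 mul0r.
Qed.
Lemma idem_eq n (hn : (1 <= n)%N) (f : dual n) : dual_idem f -> forall t,
  f t = v ^+ tsz t * \sum_(s : Defs.basis n) ((phit t == mnm_of s) : bool)%:R * (f s * f s).
Proof. by move=> hf t; rewrite -{1}hf dmul_sq. Qed.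

Lemma supp n (hn : (1 <= n)%N) (f : dual n) : dual_idem f ->
  forall t, f t != 0 -> Zb t || Tb t.
Proof.
move=> hf.
pose D := \max_(b : Defs.basis n) dm (mnm_of b).
suff S : forall k t, (D - dm (mnm_of t) < k)%N -> f t != 0 -> Zb t || Tb t.
  by move=> t; apply: (S D.+1); rewrite ltnS leq_subr.
elim => [//|k IH] t hk ft.
case: (boolP (Zb t || Tb t)) => // nzt.
have [s hs fs] : exists2 s, phit t = mnm_of s & f s != 0.
  case: (boolP [exists s, (phit t == mnm_of s) && (f s != 0)]).
    by case/existsP => s /andP [/eqP h1 h2]; exists s.
  move/existsPn => H; case/negP: ft; rewrite (idem_eq _ hn _ hf t) big1 ?mulr0 // => s _.
  have := H s; rewrite negb_and negbK; case/orP => [/negbTE -> | /eqP ->].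
    by rewrite mul0r.
  by rewrite mul0r mulr0.
have hinc := incr _ _ hn nzt.
have hb : (dm (mnm_of s) <= D)%N by apply: (@leq_bigmax _ (fun b => dm (mnm_of b))).
have := IH s _ fs; rewrite -hs in hb *.
move=> /(_ _) h; have {}h := h ltac:(lia).
by case/negP: nzt; apply: L12 _ _ _ hn hs h.
Qed.
Lemma form_at_tau n (hn : (1 <= n)%N) (f : dual n) a b :
  (forall t, f t = (Zb t)%:R * a + (Tb t)%:R * b) -> f (taub n hn) = b.
Proof.
move=> hf; rewrite hf Tb_taub.
have -> : Zb (taub n hn) = false by apply/negP => zt'; exact: ZT_excl _ _ zt' (Tb_taub n hn).
by rewrite mul0r add0r mul1r.
Qed.

Lemma form_ne n (hn : (1 <= n)%N) (f : dual n) a b : b != 0 ->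
  (forall t, f t = (Zb t)%:R * a + (Tb t)%:R * b) -> f <> 0 /\ f <> dunit n.
Proof.
move=> b0 hf; have ht := form_at_tau _ hn _ _ _ hf.
split => e.
  by move: ht; rewrite e ffunE => /esym/eqP; rewrite (negbTE b0).
move: ht; rewrite e dunitE.
have -> : Zb (taub n hn) = false by apply/negP => zt'; exact: ZT_excl _ _ zt' (Tb_taub n hn).
by move=> /esym/eqP; rewrite (negbTE b0).
Qed.

Theorem proposition5p6 (n : nat) (hn : (1 <= n)%N) (f : dual n) :
  dual_elt f ->
  (dual_idem f /\ f <> 0 /\ f <> dunit n) <->
  (f = vinv_alpha n \/ f = dunit n - vinv_alpha n).
Proof.
have vi0 : v^-1 != 0 by rewrite invr_eq0 v_neq0.
have hvv : v * (v^-1 * v^-1) = v^-1 by rewrite mulrA mulfV ?v_neq0 // mul1r.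
move=> _; split; last first.
  case=> ->.
    have form : forall t, vinv_alpha n t = (Zb t)%:R * 0 + (Tb t)%:R * v^-1.
      by move=> t; rewrite vinvE mulr0 add0r mulrC.
    split; first exact: (form_idem _ hn _ _ _ form (mulr0 0) hvv).
    exact: (form_ne _ hn _ _ _ vi0 form).
  have form : forall t, (dunit n - vinv_alpha n) t = (Zb t)%:R * 1 + (Tb t)%:R * v^-1.
    by move=> t; rewrite ffunE dunitE ffunE vinvE -mulNr oppK2 mulr1 mulrC.
  split; first exact: (form_idem _ hn _ _ _ form (mulr1 1) hvv).
  exact: (form_ne _ hn _ _ _ vi0 form).
case=> hf [f0 fd].
set a := f (zb n); set b := f (taub n hn).
have form : forall t, f t = (Zb t)%:R * a + (Tb t)%:R * b.
  move=> t; case: (boolP (Zb t)) => zt.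
    have e := Zb_uniq _ _ zt.
    have -> : Tb t = false by apply/negP => tt; exact: ZT_excl _ _ zt tt.
    by rewrite e /= mul1r mul0r addr0.
  case: (boolP (Tb t)) => tt.
    by rewrite (Tb_uniq _ hn _ tt) /= mul0r add0r mul1r.
  rewrite /= !mul0r addr0; apply/eqP; apply: contraT => ft.
  by have := supp _ hn _ hf t ft; rewrite (negbTE zt) (negbTE tt).
have ha : a * a = a.
  have := idem_eq _ hn _ hf (zb n).
  by rewrite tsz_zb expr0 mul1r (@sum_pick_b n _ _ _ (phit_zb n)).
have hb : v * (b * b) = b.
  have := idem_eq _ hn _ hf (taub n hn).
  by rewrite tsz_taub expr1 (@sum_pick_b n _ _ _ (phit_taub n hn)).
have ha' : a = 0 \/ a = 1.
  have : a * (a - 1) = 0 by rewrite mulrBr mulr1 ha subrr.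
  by move/eqP; rewrite mulf_eq0 subr_eq0 => /orP [/eqP|/eqP]; [left|right].
have hb' : b = 0 \/ b = v^-1.
  have : b * (v * b - 1) = 0 by rewrite mulrBr mulr1 mulrCA hb subrr.
  move/eqP; rewrite mulf_eq0 subr_eq0 => /orP [/eqP|/eqP e]; [left|right] => //.
  by rewrite -(mulKf v_neq0 b) e mulr1.
case: hb' => hb0.
  exfalso; case: ha' => ha0.
    by apply: f0; apply/ffunP => t; rewrite form ffunE ha0 hb0 !mulr0 addr0.
  by apply: fd; apply/ffunP => t; rewrite form dunitE ha0 hb0 mulr1 mulr0 addr0.
case: ha' => ha0.
  by left; apply/ffunP => t; rewrite form vinvE ha0 hb0 mulr0 add0r mulrC.
right; apply/ffunP => t.
by rewrite form ffunE dunitE ffunE vinvE ha0 hb0 -mulNr oppK2 mulr1 mulrC.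
Qed.
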